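(* Let $Q$ be a non-degenerate non-convex (and not self-intersecting) quadrangle of perimeter $2$. Then its dual quadrangle $Q^\circ$ is also non-convex (and not self-intersecting).
   Context: Identify $\mathbb{R}^2$ with $\mathbb{C}$. A quadrangle $Q=ABCD$ is an ordered 4-tuple of points $A,B,C,D\in\mathbb{C}$: $A$ is the first vertex and the order $A\to B\to C\to D\to A$ is the direction of traversal. Its edge vectors are $z_1=B-A$, $z_2=C-B$, $z_3=D-C$, $z_4=A-D$, so $z_1+z_2+z_3+z_4=0$; its perimeter is $|z_1|+|z_2|+|z_3|+|z_4|$. $Q$ is non-degenerate if each pair of consecutive edge vectors $(z_1,z_2),(z_2,z_3),(z_3,z_4),(z_4,z_1)$ consists of nonzero, non-collinear vectors. A non-degenerate quadrangle is self-intersecting if one of the pairs of opposite edges (segments $AB$ and $CD$, or $BC$ and $DA$) intersect; it is convex if it is not self-intersecting and all its interior angles are less than $\pi$; it is non-convex if it is neither self-intersecting nor convex. Associated plane: for a non-degenerate $Q$ of perimeter $2$, choose $u_1,\dots,u_4\in\mathbb{C}$ with $u_k^2=z_k$, where $u_1$ is an arbitrary square root of $z_1$ and for $k=1,2,3$ the sign of $u_{k+1}$ is chosen so that $\operatorname{Im}(\overline{u_k}u_{k+1})$ has the same sign as $\operatorname{Im}(\overline{z_k}z_{k+1})$. Write $u_k=a_k+i b_k$ and $\bar a=(a_1,a_2,a_3,a_4)$, $\bar b=(b_1,b_2,b_3,b_4)$; these are orthonormal in $\mathbb{R}^4$. Let $\Pi=\operatorname{span}(\bar a,\bar b)$ and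 $\Pi^\perp$ its orthogonal complement. Dual quadrangle: choose an orthonormal basis $(\bar c,\bar d)$ of $\Pi^\perp$, put $w_k=(c_k+i d_k)^2$; then $\sum_k w_k=0$ and $\sum_k|w_k|=2$. The dual quadrangle $Q^\circ=KLMN$ is the quadrangle with $L-K=w_1$, $M-L=w_2$, $N-M=w_3$, $K-N=w_4$. It is determined up to rotation, reflection and translation. *)

(* Defs.v *)
(* plane = R*R identified with C. *)
From Stdlib Require Import Reals.
Open Scope R_scope.

Definition pt := (R * R)%type.

Definition padd (p q : pt) : pt := (fst p + fst q, snd p + snd q).
Definition psub (p q : pt) : pt := (fst p - fst q, snd p - snd q).
Definition pscale (s : R) (p : pt) : pt := (s * fst p, s * snd p).

Definition cross (z w : pt) : R := fst z * snd w - snd z * fst w.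
Definition cnorm (z : pt) : R := sqrt (fst z * fst z + snd z * snd z).
Definition csq (u : pt) : pt :=
  (fst u * fst u - snd u * snd u, 2 * fst u * snd u).

Definition noncollinear (z w : pt) : Prop :=
  z <> (0, 0) /\ w <> (0, 0) /\ cross z w <> 0.

Definition perimeter (A B C D : pt) : R :=
  cnorm (psub B A) + cnorm (psub C B) + cnorm (psub D C) + cnorm (psub A D).

Definition nondegenerate (A B C D : pt) : Prop :=
  noncollinear (psub B A) (psub C B) /\
  noncollinear (psub C B) (psub D C) /\
  noncollinear (psub D C) (psub A D) /\
  noncollinear (psub A D) (psub B A).

Definition segments_meet (P Q R' S : pt) : Prop :=
  exists s t, 0 <= s <= 1 /\ 0 <= t <= 1 /\
    padd P (pscale s (psub Q P)) = padd R' (pscale t (psub S R')).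

Definition self_intersecting (A B C D : pt) : Prop :=
  nondegenerate A B C D /\
  (segments_meet A B C D \/ segments_meet B C D A).

(* twice the signed (shoelace) area; its sign is the orientation of the
   traversal A -> B -> C -> D -> A *)
Definition signed_area2 (A B C D : pt) : R :=
  cross A B + cross B C + cross C D + cross D A.

(* For a simple (non-self-intersecting) quadrangle, the interior angle at a
   vertex is < pi iff the turn there (cross of incoming and outgoing edge
   vectors) has the same sign as the orientation of the quadrangle. *)
Definition interior_angles_lt_pi (A B C D : pt) : Prop :=
  let o := signed_area2 A B C D in
  0 < cross (psub A D) (psub B A) * o /\
  0 < cross (psub B A) (psub C B) * o /\
  0 < cross (psub C B) (psub D C) * o /\
  0 < cross (psub D C) (psub A D) * o.

Definition convex (A B C D : pt) : Prop :=
  nondegenerate A B C D /\ ~ self_intersecting A B C D /\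
  interior_angles_lt_pi A B C D.

Definition nonconvex (A B C D : pt) : Prop :=
  nondegenerate A B C D /\ ~ self_intersecting A B C D /\
  ~ convex A B C D.

Definition same_sign (x y : R) : Prop := 0 < x * y.

(* u1..u4 are square roots of the edge vectors of ABCD chosen with the sign
   rule of the associated plane. *)
Definition admissible_roots (A B C D u1 u2 u3 u4 : pt) : Prop :=
  csq u1 = psub B A /\ csq u2 = psub C B /\
  csq u3 = psub D C /\ csq u4 = psub A D /\
  same_sign (cross u1 u2) (cross (psub B A) (psub C B)) /\
  same_sign (cross u2 u3) (cross (psub C B) (psub D C)) /\
  same_sign (cross u3 u4) (cross (psub D C) (psub A D)).

Definition dot4 (x1 x2 x3 x4 y1 y2 y3 y4 : R) : R :=
  x1 * y1 + x2 * y2 + x3 * y3 + x4 * y4.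

(* (c,d) is an orthonormal basis of the orthogonal complement of
   span(a,b) in R^4, where a = (Re u_k)_k, b = (Im u_k)_k.  (Since a, b are
   orthonormal, any orthonormal pair orthogonal to both is a basis of the
   2-dimensional complement.) *)
Definition dual_basis (u1 u2 u3 u4 : pt) (c1 c2 c3 c4 d1 d2 d3 d4 : R) : Prop :=
  let a1 := fst u1 in let a2 := fst u2 in let a3 := fst u3 in let a4 := fst u4 in
  let b1 := snd u1 in let b2 := snd u2 in let b3 := snd u3 in let b4 := snd u4 in
  dot4 c1 c2 c3 c4 c1 c2 c3 c4 = 1 /\
  dot4 d1 d2 d3 d4 d1 d2 d3 d4 = 1 /\
  dot4 c1 c2 c3 c4 d1 d2 d3 d4 = 0 /\
  dot4 c1 c2 c3 c4 a1 a2 a3 a4 = 0 /\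
  dot4 c1 c2 c3 c4 b1 b2 b3 b4 = 0 /\
  dot4 d1 d2 d3 d4 a1 a2 a3 a4 = 0 /\
  dot4 d1 d2 d3 d4 b1 b2 b3 b4 = 0.

Definition is_dual (u1 u2 u3 u4 K L M N : pt) : Prop :=
  exists c1 c2 c3 c4 d1 d2 d3 d4 : R,
    dual_basis u1 u2 u3 u4 c1 c2 c3 c4 d1 d2 d3 d4 /\
    psub L K = csq (c1, d1) /\
    psub M L = csq (c2, d2) /\
    psub N M = csq (c3, d3) /\
    psub K N = csq (c4, d4).

(* Main.v *)
Require Import Defs.
From Stdlib Require Import Reals Lra Psatz.
Open Scope R_scope.
Definition det3 (a1 a2 a3 b1 b2 b3 c1 c2 c3 : R) : R :=
  a1*(b2*c3-b3*c2) - a2*(b1*c3-b3*c1) + a3*(b1*c2-b2*c1).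

Definition det4 (x1 x2 x3 x4 y1 y2 y3 y4 c1 c2 c3 c4 d1 d2 d3 d4 : R) : R :=
  x1*(det3 y2 y3 y4 c2 c3 c4 d2 d3 d4) + x2*(- det3 y1 y3 y4 c1 c3 c4 d1 d3 d4) + x3*(det3 y1 y2 y4 c1 c2 c4 d1 d2 d4) + x4*(- det3 y1 y2 y3 c1 c2 c3 d1 d2 d3).

Lemma core (x1 x2 x3 x4 y1 y2 y3 y4 c1 c2 c3 c4 d1 d2 d3 d4 : R) :
  x1*x1+x2*x2+x3*x3+x4*x4 = 1 ->
  y1*y1+y2*y2+y3*y3+y4*y4 = 1 ->
  x1*y1+x2*y2+x3*y3+x4*y4 = 0 ->
  c1*c1+c2*c2+c3*c3+c4*c4 = 1 ->
  d1*d1+d2*d2+d3*d3+d4*d4 = 1 ->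
  c1*d1+c2*d2+c3*d3+c4*d4 = 0 ->
  c1*x1+c2*x2+c3*x3+c4*x4 = 0 ->
  c1*y1+c2*y2+c3*y3+c4*y4 = 0 ->
  d1*x1+d2*x2+d3*x3+d4*x4 = 0 ->
  d1*y1+d2*y2+d3*y3+d4*y4 = 0 ->
  cross (csq (c1,d1)) (csq (c2,d2)) * cross (csq (c2,d2)) (csq (c3,d3)) * cross (csq (c3,d3)) (csq (c4,d4)) * cross (csq (c4,d4)) (csq (c1,d1)) =
  cross (csq (x1,y1)) (csq (x2,y2)) * cross (csq (x2,y2)) (csq (x3,y3)) * cross (csq (x3,y3)) (csq (x4,y4)) * cross (csq (x4,y4)) (csq (x1,y1)).

Proof.
intros Hxx Hyy Hxy Hcc Hdd Hcd Hcx Hcy Hdx Hdy.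
assert (C00 : (det3 y2 y3 y4 c2 c3 c4 d2 d3 d4) = (det4 x1 x2 x3 x4 y1 y2 y3 y4 c1 c2 c3 c4 d1 d2 d3 d4)*x1).
{ assert (E : (det3 y2 y3 y4 c2 c3 c4 d2 d3 d4) - (det4 x1 x2 x3 x4 y1 y2 y3 y4 c1 c2 c3 c4 d1 d2 d3 d4)*x1 = (det3 y2 y3 y4 c2 c3 c4 d2 d3 d4)*(1 - (x1*x1+x2*x2+x3*x3+x4*x4)) + (- det3 x2 x3 x4 c2 c3 c4 d2 d3 d4)*(0 - (x1*y1+x2*y2+x3*y3+x4*y4)) + (det3 x2 x3 x4 y2 y3 y4 d2 d3 d4)*(0 - (c1*x1+c2*x2+c3*x3+c4*x4)) + (- det3 x2 x3 x4 y2 y3 y4 c2 c3 c4)*(0 - (d1*x1+d2*x2+d3*x3+d4*x4))) by (unfold det4, det3; ring).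
  rewrite Hxx, Hxy, Hcx, Hdx in E. apply Rminus_diag_uniq. rewrite E; ring. }
assert (C01 : (- det3 y1 y3 y4 c1 c3 c4 d1 d3 d4) = (det4 x1 x2 x3 x4 y1 y2 y3 y4 c1 c2 c3 c4 d1 d2 d3 d4)*x2).
{ assert (E : (- det3 y1 y3 y4 c1 c3 c4 d1 d3 d4) - (det4 x1 x2 x3 x4 y1 y2 y3 y4 c1 c2 c3 c4 d1 d2 d3 d4)*x2 = (- det3 y1 y3 y4 c1 c3 c4 d1 d3 d4)*(1 - (x1*x1+x2*x2+x3*x3+x4*x4)) + (det3 x1 x3 x4 c1 c3 c4 d1 d3 d4)*(0 - (x1*y1+x2*y2+x3*y3+x4*y4)) + (- det3 x1 x3 x4 y1 y3 y4 d1 d3 d4)*(0 - (c1*x1+c2*x2+c3*x3+c4*x4)) + (det3 x1 x3 x4 y1 y3 y4 c1 c3 c4)*(0 - (d1*x1+d2*x2+d3*x3+d4*x4))) by (unfold det4, det3; ring).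
  rewrite Hxx, Hxy, Hcx, Hdx in E. apply Rminus_diag_uniq. rewrite E; ring. }
assert (C02 : (det3 y1 y2 y4 c1 c2 c4 d1 d2 d4) = (det4 x1 x2 x3 x4 y1 y2 y3 y4 c1 c2 c3 c4 d1 d2 d3 d4)*x3).
{ assert (E : (det3 y1 y2 y4 c1 c2 c4 d1 d2 d4) - (det4 x1 x2 x3 x4 y1 y2 y3 y4 c1 c2 c3 c4 d1 d2 d3 d4)*x3 = (det3 y1 y2 y4 c1 c2 c4 d1 d2 d4)*(1 - (x1*x1+x2*x2+x3*x3+x4*x4)) + (- det3 x1 x2 x4 c1 c2 c4 d1 d2 d4)*(0 - (x1*y1+x2*y2+x3*y3+x4*y4)) + (det3 x1 x2 x4 y1 y2 y4 d1 d2 d4)*(0 - (c1*x1+c2*x2+c3*x3+c4*x4)) + (- det3 x1 x2 x4 y1 y2 y4 c1 c2 c4)*(0 - (d1*x1+d2*x2+d3*x3+d4*x4))) by (unfold det4, det3; ring).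
  rewrite Hxx, Hxy, Hcx, Hdx in E. apply Rminus_diag_uniq. rewrite E; ring. }
assert (C03 : (- det3 y1 y2 y3 c1 c2 c3 d1 d2 d3) = (det4 x1 x2 x3 x4 y1 y2 y3 y4 c1 c2 c3 c4 d1 d2 d3 d4)*x4).
{ assert (E : (- det3 y1 y2 y3 c1 c2 c3 d1 d2 d3) - (det4 x1 x2 x3 x4 y1 y2 y3 y4 c1 c2 c3 c4 d1 d2 d3 d4)*x4 = (- det3 y1 y2 y3 c1 c2 c3 d1 d2 d3)*(1 - (x1*x1+x2*x2+x3*x3+x4*x4)) + (det3 x1 x2 x3 c1 c2 c3 d1 d2 d3)*(0 - (x1*y1+x2*y2+x3*y3+x4*y4)) + (- det3 x1 x2 x3 y1 y2 y3 d1 d2 d3)*(0 - (c1*x1+c2*x2+c3*x3+c4*x4)) + (det3 x1 x2 x3 y1 y2 y3 c1 c2 c3)*(0 - (d1*x1+d2*x2+d3*x3+d4*x4))) by (unfold det4, det3; ring).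
  rewrite Hxx, Hxy, Hcx, Hdx in E. apply Rminus_diag_uniq. rewrite E; ring. }
assert (C10 : (- det3 x2 x3 x4 c2 c3 c4 d2 d3 d4) = (det4 x1 x2 x3 x4 y1 y2 y3 y4 c1 c2 c3 c4 d1 d2 d3 d4)*y1).
{ assert (E : (- det3 x2 x3 x4 c2 c3 c4 d2 d3 d4) - (det4 x1 x2 x3 x4 y1 y2 y3 y4 c1 c2 c3 c4 d1 d2 d3 d4)*y1 = (det3 y2 y3 y4 c2 c3 c4 d2 d3 d4)*(0 - (x1*y1+x2*y2+x3*y3+x4*y4)) + (- det3 x2 x3 x4 c2 c3 c4 d2 d3 d4)*(1 - (y1*y1+y2*y2+y3*y3+y4*y4)) + (det3 x2 x3 x4 y2 y3 y4 d2 d3 d4)*(0 - (c1*y1+c2*y2+c3*y3+c4*y4)) + (- det3 x2 x3 x4 y2 y3 y4 c2 c3 c4)*(0 - (d1*y1+d2*y2+d3*y3+d4*y4))) by (unfold det4, det3; ring).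
  rewrite Hxy, Hyy, Hcy, Hdy in E. apply Rminus_diag_uniq. rewrite E; ring. }
assert (C11 : (det3 x1 x3 x4 c1 c3 c4 d1 d3 d4) = (det4 x1 x2 x3 x4 y1 y2 y3 y4 c1 c2 c3 c4 d1 d2 d3 d4)*y2).
{ assert (E : (det3 x1 x3 x4 c1 c3 c4 d1 d3 d4) - (det4 x1 x2 x3 x4 y1 y2 y3 y4 c1 c2 c3 c4 d1 d2 d3 d4)*y2 = (- det3 y1 y3 y4 c1 c3 c4 d1 d3 d4)*(0 - (x1*y1+x2*y2+x3*y3+x4*y4)) + (det3 x1 x3 x4 c1 c3 c4 d1 d3 d4)*(1 - (y1*y1+y2*y2+y3*y3+y4*y4)) + (- det3 x1 x3 x4 y1 y3 y4 d1 d3 d4)*(0 - (c1*y1+c2*y2+c3*y3+c4*y4)) + (det3 x1 x3 x4 y1 y3 y4 c1 c3 c4)*(0 - (d1*y1+d2*y2+d3*y3+d4*y4))) by (unfold det4, det3; ring).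
  rewrite Hxy, Hyy, Hcy, Hdy in E. apply Rminus_diag_uniq. rewrite E; ring. }
assert (C12 : (- det3 x1 x2 x4 c1 c2 c4 d1 d2 d4) = (det4 x1 x2 x3 x4 y1 y2 y3 y4 c1 c2 c3 c4 d1 d2 d3 d4)*y3).
{ assert (E : (- det3 x1 x2 x4 c1 c2 c4 d1 d2 d4) - (det4 x1 x2 x3 x4 y1 y2 y3 y4 c1 c2 c3 c4 d1 d2 d3 d4)*y3 = (det3 y1 y2 y4 c1 c2 c4 d1 d2 d4)*(0 - (x1*y1+x2*y2+x3*y3+x4*y4)) + (- det3 x1 x2 x4 c1 c2 c4 d1 d2 d4)*(1 - (y1*y1+y2*y2+y3*y3+y4*y4)) + (det3 x1 x2 x4 y1 y2 y4 d1 d2 d4)*(0 - (c1*y1+c2*y2+c3*y3+c4*y4)) + (- det3 x1 x2 x4 y1 y2 y4 c1 c2 c4)*(0 - (d1*y1+d2*y2+d3*y3+d4*y4))) by (unfold det4, det3; ring).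
  rewrite Hxy, Hyy, Hcy, Hdy in E. apply Rminus_diag_uniq. rewrite E; ring. }
assert (C13 : (det3 x1 x2 x3 c1 c2 c3 d1 d2 d3) = (det4 x1 x2 x3 x4 y1 y2 y3 y4 c1 c2 c3 c4 d1 d2 d3 d4)*y4).
{ assert (E : (det3 x1 x2 x3 c1 c2 c3 d1 d2 d3) - (det4 x1 x2 x3 x4 y1 y2 y3 y4 c1 c2 c3 c4 d1 d2 d3 d4)*y4 = (- det3 y1 y2 y3 c1 c2 c3 d1 d2 d3)*(0 - (x1*y1+x2*y2+x3*y3+x4*y4)) + (det3 x1 x2 x3 c1 c2 c3 d1 d2 d3)*(1 - (y1*y1+y2*y2+y3*y3+y4*y4)) + (- det3 x1 x2 x3 y1 y2 y3 d1 d2 d3)*(0 - (c1*y1+c2*y2+c3*y3+c4*y4)) + (det3 x1 x2 x3 y1 y2 y3 c1 c2 c3)*(0 - (d1*y1+d2*y2+d3*y3+d4*y4))) by (unfold det4, det3; ring).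
  rewrite Hxy, Hyy, Hcy, Hdy in E. apply Rminus_diag_uniq. rewrite E; ring. }
assert (C20 : (det3 x2 x3 x4 y2 y3 y4 d2 d3 d4) = (det4 x1 x2 x3 x4 y1 y2 y3 y4 c1 c2 c3 c4 d1 d2 d3 d4)*c1).
{ assert (E : (det3 x2 x3 x4 y2 y3 y4 d2 d3 d4) - (det4 x1 x2 x3 x4 y1 y2 y3 y4 c1 c2 c3 c4 d1 d2 d3 d4)*c1 = (det3 y2 y3 y4 c2 c3 c4 d2 d3 d4)*(0 - (c1*x1+c2*x2+c3*x3+c4*x4)) + (- det3 x2 x3 x4 c2 c3 c4 d2 d3 d4)*(0 - (c1*y1+c2*y2+c3*y3+c4*y4)) + (det3 x2 x3 x4 y2 y3 y4 d2 d3 d4)*(1 - (c1*c1+c2*c2+c3*c3+c4*c4)) + (- det3 x2 x3 x4 y2 y3 y4 c2 c3 c4)*(0 - (c1*d1+c2*d2+c3*d3+c4*d4))) by (unfold det4, det3; ring).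
  rewrite Hcx, Hcy, Hcc, Hcd in E. apply Rminus_diag_uniq. rewrite E; ring. }
assert (C21 : (- det3 x1 x3 x4 y1 y3 y4 d1 d3 d4) = (det4 x1 x2 x3 x4 y1 y2 y3 y4 c1 c2 c3 c4 d1 d2 d3 d4)*c2).
{ assert (E : (- det3 x1 x3 x4 y1 y3 y4 d1 d3 d4) - (det4 x1 x2 x3 x4 y1 y2 y3 y4 c1 c2 c3 c4 d1 d2 d3 d4)*c2 = (- det3 y1 y3 y4 c1 c3 c4 d1 d3 d4)*(0 - (c1*x1+c2*x2+c3*x3+c4*x4)) + (det3 x1 x3 x4 c1 c3 c4 d1 d3 d4)*(0 - (c1*y1+c2*y2+c3*y3+c4*y4)) + (- det3 x1 x3 x4 y1 y3 y4 d1 d3 d4)*(1 - (c1*c1+c2*c2+c3*c3+c4*c4)) + (det3 x1 x3 x4 y1 y3 y4 c1 c3 c4)*(0 - (c1*d1+c2*d2+c3*d3+c4*d4))) by (unfold det4, det3; ring).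
  rewrite Hcx, Hcy, Hcc, Hcd in E. apply Rminus_diag_uniq. rewrite E; ring. }
assert (C22 : (det3 x1 x2 x4 y1 y2 y4 d1 d2 d4) = (det4 x1 x2 x3 x4 y1 y2 y3 y4 c1 c2 c3 c4 d1 d2 d3 d4)*c3).
{ assert (E : (det3 x1 x2 x4 y1 y2 y4 d1 d2 d4) - (det4 x1 x2 x3 x4 y1 y2 y3 y4 c1 c2 c3 c4 d1 d2 d3 d4)*c3 = (det3 y1 y2 y4 c1 c2 c4 d1 d2 d4)*(0 - (c1*x1+c2*x2+c3*x3+c4*x4)) + (- det3 x1 x2 x4 c1 c2 c4 d1 d2 d4)*(0 - (c1*y1+c2*y2+c3*y3+c4*y4)) + (det3 x1 x2 x4 y1 y2 y4 d1 d2 d4)*(1 - (c1*c1+c2*c2+c3*c3+c4*c4)) + (- det3 x1 x2 x4 y1 y2 y4 c1 c2 c4)*(0 - (c1*d1+c2*d2+c3*d3+c4*d4))) by (unfold det4, det3; ring).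
  rewrite Hcx, Hcy, Hcc, Hcd in E. apply Rminus_diag_uniq. rewrite E; ring. }
assert (C23 : (- det3 x1 x2 x3 y1 y2 y3 d1 d2 d3) = (det4 x1 x2 x3 x4 y1 y2 y3 y4 c1 c2 c3 c4 d1 d2 d3 d4)*c4).
{ assert (E : (- det3 x1 x2 x3 y1 y2 y3 d1 d2 d3) - (det4 x1 x2 x3 x4 y1 y2 y3 y4 c1 c2 c3 c4 d1 d2 d3 d4)*c4 = (- det3 y1 y2 y3 c1 c2 c3 d1 d2 d3)*(0 - (c1*x1+c2*x2+c3*x3+c4*x4)) + (det3 x1 x2 x3 c1 c2 c3 d1 d2 d3)*(0 - (c1*y1+c2*y2+c3*y3+c4*y4)) + (- det3 x1 x2 x3 y1 y2 y3 d1 d2 d3)*(1 - (c1*c1+c2*c2+c3*c3+c4*c4)) + (det3 x1 x2 x3 y1 y2 y3 c1 c2 c3)*(0 - (c1*d1+c2*d2+c3*d3+c4*d4))) by (unfold det4, det3; ring).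
  rewrite Hcx, Hcy, Hcc, Hcd in E. apply Rminus_diag_uniq. rewrite E; ring. }
assert (C30 : (- det3 x2 x3 x4 y2 y3 y4 c2 c3 c4) = (det4 x1 x2 x3 x4 y1 y2 y3 y4 c1 c2 c3 c4 d1 d2 d3 d4)*d1).
{ assert (E : (- det3 x2 x3 x4 y2 y3 y4 c2 c3 c4) - (det4 x1 x2 x3 x4 y1 y2 y3 y4 c1 c2 c3 c4 d1 d2 d3 d4)*d1 = (det3 y2 y3 y4 c2 c3 c4 d2 d3 d4)*(0 - (d1*x1+d2*x2+d3*x3+d4*x4)) + (- det3 x2 x3 x4 c2 c3 c4 d2 d3 d4)*(0 - (d1*y1+d2*y2+d3*y3+d4*y4)) + (det3 x2 x3 x4 y2 y3 y4 d2 d3 d4)*(0 - (c1*d1+c2*d2+c3*d3+c4*d4)) + (- det3 x2 x3 x4 y2 y3 y4 c2 c3 c4)*(1 - (d1*d1+d2*d2+d3*d3+d4*d4))) by (unfold det4, det3; ring).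
  rewrite Hdx, Hdy, Hcd, Hdd in E. apply Rminus_diag_uniq. rewrite E; ring. }
assert (C31 : (det3 x1 x3 x4 y1 y3 y4 c1 c3 c4) = (det4 x1 x2 x3 x4 y1 y2 y3 y4 c1 c2 c3 c4 d1 d2 d3 d4)*d2).
{ assert (E : (det3 x1 x3 x4 y1 y3 y4 c1 c3 c4) - (det4 x1 x2 x3 x4 y1 y2 y3 y4 c1 c2 c3 c4 d1 d2 d3 d4)*d2 = (- det3 y1 y3 y4 c1 c3 c4 d1 d3 d4)*(0 - (d1*x1+d2*x2+d3*x3+d4*x4)) + (det3 x1 x3 x4 c1 c3 c4 d1 d3 d4)*(0 - (d1*y1+d2*y2+d3*y3+d4*y4)) + (- det3 x1 x3 x4 y1 y3 y4 d1 d3 d4)*(0 - (c1*d1+c2*d2+c3*d3+c4*d4)) + (det3 x1 x3 x4 y1 y3 y4 c1 c3 c4)*(1 - (d1*d1+d2*d2+d3*d3+d4*d4))) by (unfold det4, det3; ring).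
  rewrite Hdx, Hdy, Hcd, Hdd in E. apply Rminus_diag_uniq. rewrite E; ring. }
assert (C32 : (- det3 x1 x2 x4 y1 y2 y4 c1 c2 c4) = (det4 x1 x2 x3 x4 y1 y2 y3 y4 c1 c2 c3 c4 d1 d2 d3 d4)*d3).
{ assert (E : (- det3 x1 x2 x4 y1 y2 y4 c1 c2 c4) - (det4 x1 x2 x3 x4 y1 y2 y3 y4 c1 c2 c3 c4 d1 d2 d3 d4)*d3 = (det3 y1 y2 y4 c1 c2 c4 d1 d2 d4)*(0 - (d1*x1+d2*x2+d3*x3+d4*x4)) + (- det3 x1 x2 x4 c1 c2 c4 d1 d2 d4)*(0 - (d1*y1+d2*y2+d3*y3+d4*y4)) + (det3 x1 x2 x4 y1 y2 y4 d1 d2 d4)*(0 - (c1*d1+c2*d2+c3*d3+c4*d4)) + (- det3 x1 x2 x4 y1 y2 y4 c1 c2 c4)*(1 - (d1*d1+d2*d2+d3*d3+d4*d4))) by (unfold det4, det3; ring).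
  rewrite Hdx, Hdy, Hcd, Hdd in E. apply Rminus_diag_uniq. rewrite E; ring. }
assert (C33 : (det3 x1 x2 x3 y1 y2 y3 c1 c2 c3) = (det4 x1 x2 x3 x4 y1 y2 y3 y4 c1 c2 c3 c4 d1 d2 d3 d4)*d4).
{ assert (E : (det3 x1 x2 x3 y1 y2 y3 c1 c2 c3) - (det4 x1 x2 x3 x4 y1 y2 y3 y4 c1 c2 c3 c4 d1 d2 d3 d4)*d4 = (- det3 y1 y2 y3 c1 c2 c3 d1 d2 d3)*(0 - (d1*x1+d2*x2+d3*x3+d4*x4)) + (det3 x1 x2 x3 c1 c2 c3 d1 d2 d3)*(0 - (d1*y1+d2*y2+d3*y3+d4*y4)) + (- det3 x1 x2 x3 y1 y2 y3 d1 d2 d3)*(0 - (c1*d1+c2*d2+c3*d3+c4*d4)) + (det3 x1 x2 x3 y1 y2 y3 c1 c2 c3)*(1 - (d1*d1+d2*d2+d3*d3+d4*d4))) by (unfold det4, det3; ring).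
  rewrite Hdx, Hdy, Hcd, Hdd in E. apply Rminus_diag_uniq. rewrite E; ring. }
assert (Hdl : (det4 x1 x2 x3 x4 y1 y2 y3 y4 c1 c2 c3 c4 d1 d2 d3 d4)*(det4 x1 x2 x3 x4 y1 y2 y3 y4 c1 c2 c3 c4 d1 d2 d3 d4) = 1).
{ assert (E : (- det3 x2 x3 x4 y2 y3 y4 c2 c3 c4)*(- det3 x2 x3 x4 y2 y3 y4 c2 c3 c4) + (det3 x1 x3 x4 y1 y3 y4 c1 c3 c4)*(det3 x1 x3 x4 y1 y3 y4 c1 c3 c4) + (- det3 x1 x2 x4 y1 y2 y4 c1 c2 c4)*(- det3 x1 x2 x4 y1 y2 y4 c1 c2 c4) + (det3 x1 x2 x3 y1 y2 y3 c1 c2 c3)*(det3 x1 x2 x3 y1 y2 y3 c1 c2 c3) = det3 (x1*x1+x2*x2+x3*x3+x4*x4) (x1*y1+x2*y2+x3*y3+x4*y4) (c1*x1+c2*x2+c3*x3+c4*x4) (x1*y1+x2*y2+x3*y3+x4*y4) (y1*y1+y2*y2+y3*y3+y4*y4) (c1*y1+c2*y2+c3*y3+c4*y4) (c1*x1+c2*x2+c3*x3+c4*x4) (c1*y1+c2*y2+c3*y3+c4*y4) (c1*c1+c2*c2+c3*c3+c4*c4)) by (unfold det3; ring).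
  rewrite Hcc, Hcx, Hcy, Hxx, Hxy, Hyy in E.
  rewrite C30, C31, C32, C33 in E.
  replace ((det4 x1 x2 x3 x4 y1 y2 y3 y4 c1 c2 c3 c4 d1 d2 d3 d4)*(det4 x1 x2 x3 x4 y1 y2 y3 y4 c1 c2 c3 c4 d1 d2 d3 d4)) with ((det4 x1 x2 x3 x4 y1 y2 y3 y4 c1 c2 c3 c4 d1 d2 d3 d4)*(det4 x1 x2 x3 x4 y1 y2 y3 y4 c1 c2 c3 c4 d1 d2 d3 d4)*(d1*d1+d2*d2+d3*d3+d4*d4)) by (rewrite Hdd; ring).
  transitivity (det3 1 0 0 0 1 0 0 0 1); [rewrite <- E; ring | unfold det3; ring]. }
assert (Hnz : (det4 x1 x2 x3 x4 y1 y2 y3 y4 c1 c2 c3 c4 d1 d2 d3 d4) <> 0).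
{ intro h. rewrite h in Hdl. lra. }
assert (D01 : x1*x2 + y1*y2 + c1*c2 + d1*d2 = 0).
{ assert (E : (det3 y2 y3 y4 c2 c3 c4 d2 d3 d4)*x2 + (- det3 x2 x3 x4 c2 c3 c4 d2 d3 d4)*y2 + (det3 x2 x3 x4 y2 y3 y4 d2 d3 d4)*c2 + (- det3 x2 x3 x4 y2 y3 y4 c2 c3 c4)*d2 = 0) by (unfold det3; ring).
  rewrite C00, C10, C20, C30 in E.
  assert (E2 : (det4 x1 x2 x3 x4 y1 y2 y3 y4 c1 c2 c3 c4 d1 d2 d3 d4) * (x1*x2 + y1*y2 + c1*c2 + d1*d2) = 0) by (rewrite <- E; ring).
  destruct (Rmult_integral _ _ E2) as [h|h]; [contradiction | exact h]. }
assert (D12 : x2*x3 + y2*y3 + c2*c3 + d2*d3 = 0).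
{ assert (E : (- det3 y1 y3 y4 c1 c3 c4 d1 d3 d4)*x3 + (det3 x1 x3 x4 c1 c3 c4 d1 d3 d4)*y3 + (- det3 x1 x3 x4 y1 y3 y4 d1 d3 d4)*c3 + (det3 x1 x3 x4 y1 y3 y4 c1 c3 c4)*d3 = 0) by (unfold det3; ring).
  rewrite C01, C11, C21, C31 in E.
  assert (E2 : (det4 x1 x2 x3 x4 y1 y2 y3 y4 c1 c2 c3 c4 d1 d2 d3 d4) * (x2*x3 + y2*y3 + c2*c3 + d2*d3) = 0) by (rewrite <- E; ring).
  destruct (Rmult_integral _ _ E2) as [h|h]; [contradiction | exact h]. }
assert (D23 : x3*x4 + y3*y4 + c3*c4 + d3*d4 = 0).
{ assert (E : (det3 y1 y2 y4 c1 c2 c4 d1 d2 d4)*x4 + (- det3 x1 x2 x4 c1 c2 c4 d1 d2 d4)*y4 + (det3 x1 x2 x4 y1 y2 y4 d1 d2 d4)*c4 + (- det3 x1 x2 x4 y1 y2 y4 c1 c2 c4)*d4 = 0) by (unfold det3; ring).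
  rewrite C02, C12, C22, C32 in E.
  assert (E2 : (det4 x1 x2 x3 x4 y1 y2 y3 y4 c1 c2 c3 c4 d1 d2 d3 d4) * (x3*x4 + y3*y4 + c3*c4 + d3*d4) = 0) by (rewrite <- E; ring).
  destruct (Rmult_integral _ _ E2) as [h|h]; [contradiction | exact h]. }
assert (D03 : x1*x4 + y1*y4 + c1*c4 + d1*d4 = 0).
{ assert (E : (det3 y2 y3 y4 c2 c3 c4 d2 d3 d4)*x4 + (- det3 x2 x3 x4 c2 c3 c4 d2 d3 d4)*y4 + (det3 x2 x3 x4 y2 y3 y4 d2 d3 d4)*c4 + (- det3 x2 x3 x4 y2 y3 y4 c2 c3 c4)*d4 = 0) by (unfold det3; ring).
  rewrite C00, C10, C20, C30 in E.
  assert (E2 : (det4 x1 x2 x3 x4 y1 y2 y3 y4 c1 c2 c3 c4 d1 d2 d3 d4) * (x1*x4 + y1*y4 + c1*c4 + d1*d4) = 0) by (rewrite <- E; ring).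
  destruct (Rmult_integral _ _ E2) as [h|h]; [contradiction | exact h]. }
assert (J01 : c1*d2 - c2*d1 = (det4 x1 x2 x3 x4 y1 y2 y3 y4 c1 c2 c3 c4 d1 d2 d3 d4)*(x3*y4 - x4*y3)).
{ assert (E : (det3 x2 x3 x4 y2 y3 y4 d2 d3 d4)*(det3 x1 x3 x4 y1 y3 y4 c1 c3 c4) - (- det3 x1 x3 x4 y1 y3 y4 d1 d3 d4)*(- det3 x2 x3 x4 y2 y3 y4 c2 c3 c4) = (det4 x1 x2 x3 x4 y1 y2 y3 y4 c1 c2 c3 c4 d1 d2 d3 d4)*(x3*y4 - x4*y3)) by (unfold det4, det3; ring).
  rewrite C20, C31, C21, C30 in E.
  rewrite <- E. transitivity ((det4 x1 x2 x3 x4 y1 y2 y3 y4 c1 c2 c3 c4 d1 d2 d3 d4)*(det4 x1 x2 x3 x4 y1 y2 y3 y4 c1 c2 c3 c4 d1 d2 d3 d4)*(c1*d2 - c2*d1)); [rewrite Hdl; ring | ring]. }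
assert (J12 : c2*d3 - c3*d2 = (det4 x1 x2 x3 x4 y1 y2 y3 y4 c1 c2 c3 c4 d1 d2 d3 d4)*(x1*y4 - x4*y1)).
{ assert (E : (- det3 x1 x3 x4 y1 y3 y4 d1 d3 d4)*(- det3 x1 x2 x4 y1 y2 y4 c1 c2 c4) - (det3 x1 x2 x4 y1 y2 y4 d1 d2 d4)*(det3 x1 x3 x4 y1 y3 y4 c1 c3 c4) = (det4 x1 x2 x3 x4 y1 y2 y3 y4 c1 c2 c3 c4 d1 d2 d3 d4)*(x1*y4 - x4*y1)) by (unfold det4, det3; ring).
  rewrite C21, C32, C22, C31 in E.
  rewrite <- E. transitivity ((det4 x1 x2 x3 x4 y1 y2 y3 y4 c1 c2 c3 c4 d1 d2 d3 d4)*(det4 x1 x2 x3 x4 y1 y2 y3 y4 c1 c2 c3 c4 d1 d2 d3 d4)*(c2*d3 - c3*d2)); [rewrite Hdl; ring | ring]. }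
assert (J23 : c3*d4 - c4*d3 = (det4 x1 x2 x3 x4 y1 y2 y3 y4 c1 c2 c3 c4 d1 d2 d3 d4)*(x1*y2 - x2*y1)).
{ assert (E : (det3 x1 x2 x4 y1 y2 y4 d1 d2 d4)*(det3 x1 x2 x3 y1 y2 y3 c1 c2 c3) - (- det3 x1 x2 x3 y1 y2 y3 d1 d2 d3)*(- det3 x1 x2 x4 y1 y2 y4 c1 c2 c4) = (det4 x1 x2 x3 x4 y1 y2 y3 y4 c1 c2 c3 c4 d1 d2 d3 d4)*(x1*y2 - x2*y1)) by (unfold det4, det3; ring).
  rewrite C22, C33, C23, C32 in E.
  rewrite <- E. transitivity ((det4 x1 x2 x3 x4 y1 y2 y3 y4 c1 c2 c3 c4 d1 d2 d3 d4)*(det4 x1 x2 x3 x4 y1 y2 y3 y4 c1 c2 c3 c4 d1 d2 d3 d4)*(c3*d4 - c4*d3)); [rewrite Hdl; ring | ring]. }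
assert (J03 : c1*d4 - c4*d1 = (det4 x1 x2 x3 x4 y1 y2 y3 y4 c1 c2 c3 c4 d1 d2 d3 d4)*(x2*y3 - x3*y2)).
{ assert (E : (det3 x2 x3 x4 y2 y3 y4 d2 d3 d4)*(det3 x1 x2 x3 y1 y2 y3 c1 c2 c3) - (- det3 x1 x2 x3 y1 y2 y3 d1 d2 d3)*(- det3 x2 x3 x4 y2 y3 y4 c2 c3 c4) = (det4 x1 x2 x3 x4 y1 y2 y3 y4 c1 c2 c3 c4 d1 d2 d3 d4)*(x2*y3 - x3*y2)) by (unfold det4, det3; ring).
  rewrite C20, C33, C23, C30 in E.
  rewrite <- E. transitivity ((det4 x1 x2 x3 x4 y1 y2 y3 y4 c1 c2 c3 c4 d1 d2 d3 d4)*(det4 x1 x2 x3 x4 y1 y2 y3 y4 c1 c2 c3 c4 d1 d2 d3 d4)*(c1*d4 - c4*d1)); [rewrite Hdl; ring | ring]. }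
assert (K : forall p q r s : R, cross (csq (p,q)) (csq (r,s)) = 2*(p*r+q*s)*(p*s-q*r)) by (intros; unfold cross, csq; simpl; ring).
rewrite !K.
assert (V1 : c1*c2+d1*d2 = -(x1*x2+y1*y2)) by lra.
assert (V2 : c2*c3+d2*d3 = -(x2*x3+y2*y3)) by lra.
assert (V3 : c3*c4+d3*d4 = -(x3*x4+y3*y4)) by lra.
assert (V4 : c4*c1+d4*d1 = -(x4*x1+y4*y1)) by lra.
assert (W1 : c1*d2-d1*c2 = (det4 x1 x2 x3 x4 y1 y2 y3 y4 c1 c2 c3 c4 d1 d2 d3 d4)*(x3*y4-y3*x4)) by (transitivity (c1*d2 - c2*d1); [ring | rewrite J01; ring]).
assert (W2 : c2*d3-d2*c3 = -((det4 x1 x2 x3 x4 y1 y2 y3 y4 c1 c2 c3 c4 d1 d2 d3 d4)*(x4*y1-y4*x1))) by (transitivity (c2*d3 - c3*d2); [ring | rewrite J12; ring]).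
assert (W3 : c3*d4-d3*c4 = (det4 x1 x2 x3 x4 y1 y2 y3 y4 c1 c2 c3 c4 d1 d2 d3 d4)*(x1*y2-y1*x2)) by (transitivity (c3*d4 - c4*d3); [ring | rewrite J23; ring]).
assert (W4 : c4*d1-d4*c1 = -((det4 x1 x2 x3 x4 y1 y2 y3 y4 c1 c2 c3 c4 d1 d2 d3 d4)*(x2*y3-y2*x3))) by (transitivity (-(c1*d4 - c4*d1)); [ring | rewrite J03; ring]).
rewrite V1, V2, V3, V4, W1, W2, W3, W4.
transitivity (((det4 x1 x2 x3 x4 y1 y2 y3 y4 c1 c2 c3 c4 d1 d2 d3 d4)*(det4 x1 x2 x3 x4 y1 y2 y3 y4 c1 c2 c3 c4 d1 d2 d3 d4))*((det4 x1 x2 x3 x4 y1 y2 y3 y4 c1 c2 c3 c4 d1 d2 d3 d4)*(det4 x1 x2 x3 x4 y1 y2 y3 y4 c1 c2 c3 c4 d1 d2 d3 d4))*(2 * (x1 * x2 + y1 * y2) * (x1 * y2 - y1 * x2) * (2 * (x2 * x3 + y2 * y3) * (x2 * y3 - y2 * x3)) *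
 (2 * (x3 * x4 + y3 * y4) * (x3 * y4 - y3 * x4)) * (2 * (x4 * x1 + y4 * y1) * (x4 * y1 - y4 * x1)))).
{ ring. }
rewrite Hdl. ring.
Qed.

Definition tu1 (A B C D : pt) := cross (psub B A) (psub C B).
Definition tu2 (A B C D : pt) := cross (psub C B) (psub D C).
Definition tu3 (A B C D : pt) := cross (psub D C) (psub A D).
Definition tu4 (A B C D : pt) := cross (psub A D) (psub B A).

Lemma frac01 (n m : R) : 0 < m -> 0 <= n -> n <= m -> 0 <= n/m <= 1.
Proof.
  intros hm hn hnm.
  assert (E : n/m*m = n) by (field; lra).
  set (q := n/m) in *. split; nra.
Qed.

Lemma tu_rel (A B C D : pt) : tu1 A B C D + tu3 A B C D = tu2 A B C D + tu4 A B C D.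
Proof.
  destruct A, B, C, D; unfold tu1, tu2, tu3, tu4, cross, psub; simpl; ring.
Qed.

Lemma witness (A B C D : pt) :
  tu1 A B C D * tu4 A B C D < 0 -> tu2 A B C D * tu3 A B C D < 0 ->
  segments_meet A B C D.
Proof.
  destruct A as [ax ay], B as [bx by0], C as [cx cy], D as [dx dy].
  unfold tu1, tu2, tu3, tu4, cross, psub; simpl.
  set (P := (bx-ax)*(cy-by0) - (by0-ay)*(cx-bx)).
  set (Q := (cx-bx)*(dy-cy) - (cy-by0)*(dx-cx)).
  set (R0 := (bx-ax)*(dy-cy) - (by0-ay)*(dx-cx)).
  assert (E3 : (dx - cx) * (ay - dy) - (dy - cy) * (ax - dx) = Q + R0) by (unfold Q, R0; ring).
  assert (E4 : (ax - dx) * (by0 - ay) - (ay - dy) * (bx - ax) = P + R0) by (unfold P, R0; ring).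
  fold P Q. rewrite E3, E4. intros h1 h2.
  assert (hR : R0 <> 0) by (intro h; rewrite h in h1; nra).
  assert (hRR : 0 < R0*R0) by nra.
  exists (((R0+Q)*R0)/(R0*R0)), ((-P*R0)/(R0*R0)).
  split; [apply frac01; nra|].
  split; [apply frac01; nra|].
  unfold padd, pscale, psub; simpl.
  unfold P, Q, R0 in *. f_equal; field; exact hR.
Qed.

Lemma meet_prod (A B C D : pt) : segments_meet A B C D ->
  tu1 A B C D * tu4 A B C D <= 0 /\ tu2 A B C D * tu3 A B C D <= 0.
Proof.
  destruct A as [ax ay], B as [bx by0], C as [cx cy], D as [dx dy].
  intros [s [t [hs [ht He]]]].
  unfold padd, pscale, psub in He; simpl in He.
  injection He as ex ey.
  unfold tu1, tu2, tu3, tu4, cross, psub; simpl.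
  set (P := (bx-ax)*(cy-by0) - (by0-ay)*(cx-bx)).
  set (Q := (cx-bx)*(dy-cy) - (cy-by0)*(dx-cx)).
  set (R0 := (bx-ax)*(dy-cy) - (by0-ay)*(dx-cx)).
  assert (E3 : (dx - cx) * (ay - dy) - (dy - cy) * (ax - dx) = Q + R0) by (unfold Q, R0; ring).
  assert (E4 : (ax - dx) * (by0 - ay) - (ay - dy) * (bx - ax) = P + R0) by (unfold P, R0; ring).
  fold P Q. rewrite E3, E4.
  assert (S1 : s*R0 = R0 + Q).
  { unfold R0, Q.
    replace (s * ((bx - ax) * (dy - cy) - (by0 - ay) * (dx - cx)))
      with ((s*(bx-ax))*(dy-cy) - (s*(by0-ay))*(dx-cx)) by ring.
    replace (s*(bx-ax)) with (cx - ax + t*(dx-cx)) by nra.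
    replace (s*(by0-ay)) with (cy - ay + t*(dy-cy)) by nra.
    ring. }
  assert (S2 : t*R0 = - P).
  { unfold R0, P.
    replace (t * ((bx - ax) * (dy - cy) - (by0 - ay) * (dx - cx)))
      with ((bx-ax)*(t*(dy-cy)) - (by0-ay)*(t*(dx-cx))) by ring.
    replace (t*(dx-cx)) with (ax + s*(bx-ax) - cx) by nra.
    replace (t*(dy-cy)) with (ay + s*(by0-ay) - cy) by nra.
    ring. }
  clearbody P Q R0.
  assert (hRR : 0 <= R0*R0) by nra.
  split.
  - replace (P * (P + R0)) with (-(t*(1-t))*(R0*R0)) by (replace P with (-(t*R0)) by lra; ring).
    assert (0 <= t*(1-t)) by (apply Rmult_le_pos; lra). nra.
  - replace (Q * (Q + R0)) with (-(s*(1-s))*(R0*R0)) by (replace Q with (s*R0 - R0) by lra; ring).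
    assert (0 <= s*(1-s)) by (apply Rmult_le_pos; lra). nra.
Qed.

Lemma sign_cases (T1 T2 T3 T4 : R) :
  T1 <> 0 -> T2 <> 0 -> T3 <> 0 -> T4 <> 0 -> T1 + T3 = T2 + T4 ->
  0 < T1*T2*T3*T4 ->
  (0 < T1 /\ 0 < T2 /\ 0 < T3 /\ 0 < T4) \/ (T1 < 0 /\ T2 < 0 /\ T3 < 0 /\ T4 < 0) \/
  (T1*T4 < 0 /\ T2*T3 < 0) \/ (T1*T2 < 0 /\ T3*T4 < 0).
Proof.
  intros n1 n2 n3 n4 hr hp.
  replace (T1*T2*T3*T4) with ((T1*T2)*(T3*T4)) in hp by ring.
  destruct (Rdichotomy _ _ n1) as [a1|a1];
  destruct (Rdichotomy _ _ n2) as [a2|a2];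
  destruct (Rdichotomy _ _ n3) as [a3|a3];
  destruct (Rdichotomy _ _ n4) as [a4|a4];
  first [ left; repeat split; lra
        | right; left; repeat split; lra
        | exfalso; lra
        | exfalso; assert (0 < T1*T2) by nra; assert (T3*T4 < 0) by nra; nra
        | exfalso; assert (T1*T2 < 0) by nra; assert (0 < T3*T4) by nra; nra
        | right; right; left; split; nra
        | right; right; right; split; nra ].
Qed.

Lemma nz_of_nc (z w : pt) : noncollinear z w -> cross z w <> 0.
Proof. intros [_ [_ h]]; exact h. Qed.

Lemma L_nc (A B C D : pt) : nondegenerate A B C D -> ~ self_intersecting A B C D ->
  ~ convex A B C D -> tu1 A B C D * tu2 A B C D * tu3 A B C D * tu4 A B C D < 0.
Proof.
  intros hnd hsi hcv.
  pose proof hnd as [h1 [h2 [h3 h4]]].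
  apply nz_of_nc in h1, h2, h3, h4.
  fold (tu1 A B C D) in h1. fold (tu2 A B C D) in h2.
  fold (tu3 A B C D) in h3. fold (tu4 A B C D) in h4.
  destruct (Rlt_or_le (tu1 A B C D * tu2 A B C D * tu3 A B C D * tu4 A B C D) 0) as [h|h]; [exact h|].
  exfalso.
  assert (hp : 0 < tu1 A B C D * tu2 A B C D * tu3 A B C D * tu4 A B C D).
  { destruct h as [h|h]; [exact h|].
    exfalso. symmetry in h. repeat (apply Rmult_integral in h; destruct h as [h|h]); contradiction. }
  assert (ho : signed_area2 A B C D = tu1 A B C D + tu3 A B C D).
  { destruct A, B, C, D; unfold signed_area2, tu1, tu3, cross, psub; simpl; ring. }
  destruct (sign_cases _ _ _ _ h1 h2 h3 h4 (tu_rel A B C D) hp) as [c|[c|[c|c]]].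
  - apply hcv. split; [exact hnd|]. split; [exact hsi|].
    unfold interior_angles_lt_pi. rewrite ho.
    fold (tu1 A B C D) (tu2 A B C D) (tu3 A B C D) (tu4 A B C D).
    destruct c as [c1 [c2 [c3 c4]]]. repeat split; nra.
  - apply hcv. split; [exact hnd|]. split; [exact hsi|].
    unfold interior_angles_lt_pi. rewrite ho.
    fold (tu1 A B C D) (tu2 A B C D) (tu3 A B C D) (tu4 A B C D).
    destruct c as [c1 [c2 [c3 c4]]]. repeat split; nra.
  - apply hsi. split; [exact hnd|]. left. apply witness; tauto.
  - apply hsi. split; [exact hnd|]. right. apply witness.
    + change (tu2 A B C D * tu1 A B C D < 0). nra.
    + change (tu3 A B C D * tu4 A B C D < 0). tauto.
Qed.

Lemma cross0l (w : pt) : cross (0,0) w = 0.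
Proof. unfold cross; simpl; ring. Qed.
Lemma cross0r (w : pt) : cross w (0,0) = 0.
Proof. unfold cross; simpl; ring. Qed.

Lemma nz4 (a b c d : R) : a*b*c*d < 0 -> a <> 0 /\ b <> 0 /\ c <> 0 /\ d <> 0.
Proof.
  intros H; repeat split; intro h; rewrite h in H;
  rewrite ?Rmult_0_l, ?Rmult_0_r in H; lra.
Qed.

Lemma L_dual (K L M N : pt) :
  tu1 K L M N * tu2 K L M N * tu3 K L M N * tu4 K L M N < 0 -> nonconvex K L M N.
Proof.
  intros hp.
  destruct (nz4 _ _ _ _ hp) as [n1 [n2 [n3 n4]]].
  assert (hnd : nondegenerate K L M N).
  { unfold tu1, tu2, tu3, tu4 in *.
    repeat split; try assumption; intro hz; rewrite hz in *;
      rewrite ?cross0l, ?cross0r in *; contradiction. }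
  split; [exact hnd|]. split.
  - intros [_ [hm|hm]].
    + destruct (meet_prod _ _ _ _ hm) as [m1 m2].
      assert (0 <= (tu1 K L M N * tu4 K L M N) * (tu2 K L M N * tu3 K L M N)) by nra.
      nra.
    + destruct (meet_prod _ _ _ _ hm) as [m1 m2].
      change (tu2 K L M N * tu1 K L M N <= 0) in m1.
      change (tu3 K L M N * tu4 K L M N <= 0) in m2.
      assert (0 <= (tu2 K L M N * tu1 K L M N) * (tu3 K L M N * tu4 K L M N)) by nra.
      nra.
  - intros [_ [_ ha]]. unfold interior_angles_lt_pi in ha.
    fold (tu1 K L M N) (tu2 K L M N) (tu3 K L M N) (tu4 K L M N) in ha.
    set (o := signed_area2 K L M N) in *.
    destruct ha as [a1 [a2 [a3 a4]]].
    assert (0 < (tu4 K L M N * o) * (tu1 K L M N * o) * (tu2 K L M N * o) * (tu3 K L M N * o)).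
    { apply Rmult_lt_0_compat; [apply Rmult_lt_0_compat; [apply Rmult_lt_0_compat|]|]; assumption. }
    assert (0 <= (o*o)*(o*o)) by nra.
    assert ((tu1 K L M N * tu2 K L M N * tu3 K L M N * tu4 K L M N) * ((o*o)*(o*o)) <= 0).
    { set (pp := tu1 K L M N * tu2 K L M N * tu3 K L M N * tu4 K L M N) in *. set (qq := (o*o)*(o*o)) in *. nra. }
    nra.
Qed.

Lemma cnorm_csq (x y : R) : cnorm (csq (x,y)) = x*x + y*y.
Proof.
  unfold cnorm, csq; simpl.
  replace ((x * x - y * y) * (x * x - y * y) + 2 * x * y * (2 * x * y))
    with ((x*x+y*y)*(x*x+y*y)) by ring.
  apply sqrt_square. nra.
Qed.

Theorem theorem5p1 (A B C D : pt) :
  nondegenerate A B C D ->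
  nonconvex A B C D ->
  perimeter A B C D = 2 ->
  forall u1 u2 u3 u4 : pt,
    admissible_roots A B C D u1 u2 u3 u4 ->
    forall K L M N : pt,
      is_dual u1 u2 u3 u4 K L M N ->
      nonconvex K L M N.
Proof.
  intros hnd hnc hper u1 u2 u3 u4 hadm K L M N hdual.
  destruct hnc as [_ [hsi hcv]].
  pose proof (L_nc A B C D hnd hsi hcv) as hp.
  destruct hadm as [e1 [e2 [e3 [e4 _]]]].
  assert (sx : fst (psub B A) + fst (psub C B) + fst (psub D C) + fst (psub A D) = 0)
    by (destruct A, B, C, D; simpl; ring).
  assert (sy : snd (psub B A) + snd (psub C B) + snd (psub D C) + snd (psub A D) = 0)
    by (destruct A, B, C, D; simpl; ring).
  assert (hT : tu1 A B C D * tu2 A B C D * tu3 A B C D * tu4 A B C D =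
    cross (csq u1) (csq u2) * cross (csq u2) (csq u3) * cross (csq u3) (csq u4) * cross (csq u4) (csq u1)).
  { unfold tu1, tu2, tu3, tu4. rewrite <- e1, <- e2, <- e3, <- e4. reflexivity. }
  unfold perimeter in hper. rewrite <- e1, <- e2, <- e3, <- e4 in hper.
  rewrite <- e1, <- e2, <- e3, <- e4 in sx, sy.
  destruct u1 as [x1 y1], u2 as [x2 y2], u3 as [x3 y3], u4 as [x4 y4].
  rewrite !cnorm_csq in hper.
  unfold csq in sx, sy; simpl in sx, sy.
  destruct hdual as [c1 [c2 [c3 [c4 [d1 [d2 [d3 [d4 [hdb [f1 [f2 [f3 f4]]]]]]]]]]]].
  unfold dual_basis, dot4 in hdb; simpl in hdb.
  destruct hdb as [g1 [g2 [g3 [g4 [g5 [g6 g7]]]]]].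
  assert (hxx : x1*x1+x2*x2+x3*x3+x4*x4 = 1) by lra.
  assert (hyy : y1*y1+y2*y2+y3*y3+y4*y4 = 1) by lra.
  assert (hxy : x1*y1+x2*y2+x3*y3+x4*y4 = 0) by lra.
  pose proof (core x1 x2 x3 x4 y1 y2 y3 y4 c1 c2 c3 c4 d1 d2 d3 d4
                hxx hyy hxy g1 g2 g3 g4 g5 g6 g7) as hc.
  apply L_dual.
  unfold tu1, tu2, tu3, tu4. rewrite f1, f2, f3, f4, hc, <- hT. exact hp.
Qed.
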